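(* Let $\alpha\in[0,1]$ be irrational, $n\geq 2$, and let $\alpha_n=\frac{p_n}{q_n}$ be the $n$-th rational approximant to $\alpha$. Then $v_{\alpha_n}(k)=v_\alpha(k)$ for all $-q_n+1\le k\le q_{n+1}-2$ if $n$ is even, and for all $-q_{n+1}-1\le k\le q_n-2$ if $n$ is odd; and $\widetilde v_{\alpha_n}(k)=\widetilde v_\alpha(k)$ for all $-q_{n+1}-1\le k\le q_n-2$ if $n$ is even, and for all $-q_n+1\le k\le q_{n+1}-2$ if $n$ is odd.
   Context: For $\beta\in[0,1]$: $v_\beta(k)=\chi_{[1-\beta,1)}(k\beta\bmod 1)$ and $\widetilde v_\beta(k)=\chi_{(1-\beta,1]\cup\{0\}}(k\beta\bmod 1)$, $k\in\mathbb{Z}$. Rational approximants: for $\alpha=[a_1,a_2,\dots]$ (continued fraction), $p_{-1}=1,p_0=0,p_n=a_np_{n-1}+p_{n-2}$, $q_{-1}=0,q_0=1,q_n=a_nq_{n-1}+q_{n-2}$, $\alpha_n=p_n/q_n$. *)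

(* Defs.v *)
From Stdlib Require Import Reals ZArith Lra.
Open Scope R_scope.

Definition fracR (x : R) : R := x - IZR (Int_part x).

Definition v (beta : R) (k : Z) : R :=
  let t := fracR (IZR k * beta) in
  if Rle_dec (1 - beta) t then (if Rlt_dec t 1 then 1 else 0) else 0.

Definition vt (beta : R) (k : Z) : R :=
  let t := fracR (IZR k * beta) in
  if Req_EM_T t 0 then 1 else
  if Rlt_dec (1 - beta) t then (if Rle_dec t 1 then 1 else 0) else 0.

Definition irrational (x : R) : Prop :=
  ~ exists (p q : Z), q <> 0%Z /\ x = IZR p / IZR q.

Fixpoint gauss (alpha : R) (m : nat) : R :=
  match m with
  | O => alpha
  | S m' => let x := gauss alpha m' in / x - IZR (Int_part (/ x))
  end.

(* partial quotients: alpha = [a_1, a_2, ...], a_n = floor(1/x_{n-1}) for n >= 1 *)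
Definition cf_a (alpha : R) (n : nat) : Z := Int_part (/ gauss alpha (pred n)).

(* cf_pq alpha n = (p_{n-1}, p_n, q_{n-1}, q_n) *)
Fixpoint cf_pq (alpha : R) (n : nat) : Z * Z * Z * Z :=
  match n with
  | O => (1%Z, 0%Z, 0%Z, 1%Z)
  | S m =>
      let '(pm1, pm, qm1, qm) := cf_pq alpha m in
      let a := cf_a alpha (S m) in
      (pm, (a * pm + pm1)%Z, qm, (a * qm + qm1)%Z)
  end.

Definition cf_p (alpha : R) (n : nat) : Z := let '(_, p, _, _) := cf_pq alpha n in p.
Definition cf_q (alpha : R) (n : nat) : Z := let '(_, _, _, q) := cf_pq alpha n in q.

Definition approx (alpha : R) (n : nat) : R := IZR (cf_p alpha n) / IZR (cf_q alpha n).

(* Main.v *)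
Require Import Defs.
From Stdlib Require Import Reals ZArith Lra Lia Psatz.
Open Scope R_scope.

Lemma fl (x : R) (z : Z) : IZR z <= x < IZR z + 1 -> Int_part x = z.
Proof.
  intros [H1 H2]. unfold Int_part.
  assert (H : up x = (z+1)%Z).
  { symmetry; apply tech_up; rewrite plus_IZR; lra. }
  rewrite H; lia.
Qed.

Lemma key (k p q m : Z) (a D : R) : (0 < q)%Z -> IZR q * a = IZR p + D ->
  (m*q <= k*p < m*q+q)%Z -> 0 <= IZR (k*p - m*q) + IZR k * D < IZR q ->
  Int_part (IZR k * a) = m /\ Int_part (IZR k * (IZR p / IZR q)) = m.
Proof.
  intros Hq Ha [Hm1 Hm2] HD. apply IZR_lt in Hq.
  apply IZR_le in Hm1; apply IZR_lt in Hm2.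
  rewrite minus_IZR, !mult_IZR in HD.
  rewrite plus_IZR, !mult_IZR in Hm2. rewrite !mult_IZR in Hm1.
  split; apply fl.
  - assert (Hy : IZR q * (IZR k * a) = IZR k * IZR p + IZR k * D).
    { replace (IZR q * (IZR k * a)) with (IZR k * (IZR q * a)) by ring.
      rewrite Ha; ring. }
    set (y := IZR k * a) in *.
    split.
    + apply Rmult_le_reg_l with (IZR q); [lra|]. rewrite Hy. lra.
    + apply Rmult_lt_reg_l with (IZR q); [lra|]. rewrite Hy. lra.
  - assert (Hy : IZR q * (IZR k * (IZR p / IZR q)) = IZR k * IZR p).
    { field. lra. }
    set (y := IZR k * (IZR p / IZR q)) in *.
    split.
    + apply Rmult_le_reg_l with (IZR q); [lra|]. rewrite Hy. lra.
    + apply Rmult_lt_reg_l with (IZR q); [lra|]. rewrite Hy. lra.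
Qed.

Lemma v_floor b k : 0 < b <= 1 ->
  v b k = IZR (Int_part (IZR (k+1) * b) - Int_part (IZR k * b)).
Proof.
  intros Hb. unfold v, fracR.
  destruct (base_Int_part (IZR k * b)) as [B1 B2].
  rewrite plus_IZR. replace ((IZR k + 1) * b) with (IZR k * b + b) by ring.
  set (F := Int_part (IZR k * b)) in *.
  destruct (Rle_dec (1 - b) (IZR k * b - IZR F)) as [H1|H1];
  [destruct (Rlt_dec (IZR k * b - IZR F) 1) as [H2|H2]|].
  - rewrite (fl (IZR k * b + b) (F+1)).
    + replace (F + 1 - F)%Z with 1%Z by ring. reflexivity.
    + rewrite plus_IZR; lra.
  - lra.
  - rewrite (fl (IZR k * b + b) F).
    + rewrite Z.sub_diag. reflexivity.
    + lra.
Qed.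

Lemma vt_floor b k : 0 < b <= 1 ->
  vt b k = IZR (Int_part (IZR (-k) * b) - Int_part (IZR (-k-1) * b)).
Proof.
  intros Hb. unfold vt, fracR.
  replace (IZR (-k-1)) with (- IZR k - 1) by (rewrite minus_IZR, opp_IZR; ring).
  rewrite opp_IZR.
  replace ((- IZR k - 1) * b) with (- (IZR k * b) - b) by ring.
  replace (- IZR k * b) with (- (IZR k * b)) by ring.
  set (x := IZR k * b).
  destruct (base_Int_part (- x)) as [C1 C2].
  set (G := Int_part (- x)) in *.
  destruct (Rle_or_lt b (- x - IZR G)) as [Hs|Hs].
  - rewrite (fl (- x - b) G) by lra.
    rewrite (fl x (- G - 1)) by (rewrite minus_IZR, opp_IZR; lra).
    rewrite Z.sub_diag. rewrite minus_IZR, opp_IZR.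
    destruct (Req_EM_T _ 0); [lra|].
    destruct (Rlt_dec _ _); [lra|]. reflexivity.
  - rewrite (fl (- x - b) (G - 1)) by (rewrite minus_IZR; lra).
    replace (G - (G - 1))%Z with 1%Z by ring.
    destruct (Req_dec (- x - IZR G) 0) as [H0|H0].
    + rewrite (fl x (- G)) by (rewrite opp_IZR; lra).
      rewrite opp_IZR.
      destruct (Req_EM_T _ 0); [reflexivity|lra].
    + rewrite (fl x (- G - 1)) by (rewrite minus_IZR, opp_IZR; lra).
      rewrite minus_IZR, opp_IZR.
      destruct (Req_EM_T _ 0); [reflexivity|].
      destruct (Rlt_dec _ _); [|lra].
      destruct (Rle_dec _ _); [reflexivity|lra].
Qed.

Definition pp1 (alpha : R) (n : nat) : Z := let '(x, _, _, _) := cf_pq alpha n in x.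
Definition qq1 (alpha : R) (n : nat) : Z := let '(_, _, x, _) := cf_pq alpha n in x.

Lemma pq_S alpha m : cf_pq alpha (S m) =
  (cf_p alpha m, (cf_a alpha (S m) * cf_p alpha m + pp1 alpha m)%Z,
   cf_q alpha m, (cf_a alpha (S m) * cf_q alpha m + qq1 alpha m)%Z).
Proof.
  unfold cf_p, cf_q, pp1, qq1. cbn [cf_pq].
  destruct (cf_pq alpha m) as [[[x y] z] w]. reflexivity.
Qed.

Lemma p_SS alpha m : cf_p alpha (S (S m)) =
  (cf_a alpha (S (S m)) * cf_p alpha (S m) + cf_p alpha m)%Z.
Proof.
  unfold cf_p at 1. rewrite pq_S. f_equal. unfold pp1. rewrite pq_S. reflexivity.
Qed.

Lemma q_SS alpha m : cf_q alpha (S (S m)) =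
  (cf_a alpha (S (S m)) * cf_q alpha (S m) + cf_q alpha m)%Z.
Proof.
  unfold cf_q at 1. rewrite pq_S. f_equal. unfold qq1. rewrite pq_S. reflexivity.
Qed.

Lemma p0 alpha : cf_p alpha 0 = 0%Z. Proof. reflexivity. Qed.
Lemma q0 alpha : cf_q alpha 0 = 1%Z. Proof. reflexivity. Qed.
Lemma p1 alpha : cf_p alpha 1 = 1%Z.
Proof. unfold cf_p. rewrite pq_S. unfold pp1; simpl. rewrite Z.mul_0_r. reflexivity. Qed.
Lemma q1 alpha : cf_q alpha 1 = cf_a alpha 1.
Proof. unfold cf_q. rewrite pq_S. unfold qq1; simpl. rewrite Z.mul_1_r, Z.add_0_r. reflexivity. Qed.

Lemma even_S m : Nat.even (S m) = negb (Nat.even m).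
Proof.
  induction m as [|m IH]; [reflexivity|].
  change (Nat.even (S (S m))) with (Nat.even m). rewrite IH.
  destruct (Nat.even m); reflexivity.
Qed.

Definition sgnZ (m : nat) : Z := if Nat.even m then 1%Z else (-1)%Z.
Definition sgnR (m : nat) : R := if Nat.even m then 1 else -1.

Lemma step_prop x : 0 < x < 1 -> irrational x ->
  0 < / x - IZR (Int_part (/ x)) < 1 /\ irrational (/ x - IZR (Int_part (/ x))).
Proof.
  intros Hx Hirr.
  destruct (base_Int_part (/ x)) as [B1 B2].
  set (z := Int_part (/ x)) in *.
  assert (Hix : 0 < / x) by (apply Rinv_0_lt_compat; lra).
  assert (Hy0 : / x - IZR z <> 0).
  { intro H0. apply Hirr. exists 1%Z, z. split.
    - intro Hz. rewrite Hz in H0. lra.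
    - replace (IZR z) with (/ x) by lra. simpl. field. lra. }
  split; [split; lra|].
  intros [p [q [Hq Hy]]]. apply Hirr.
  assert (Hinv : / x = IZR (z*q+p) / IZR q).
  { replace (/ x) with (IZR z + IZR p / IZR q) by lra.
    rewrite plus_IZR, mult_IZR. field. apply not_0_IZR; auto. }
  assert (Hn : (z*q+p)%Z <> 0%Z).
  { intro Hn. rewrite Hn in Hinv. unfold Rdiv in Hinv. rewrite Rmult_0_l in Hinv. lra. }
  exists q, (z*q+p)%Z. split; auto.
  rewrite <- (Rinv_inv x), Hinv. field. split; apply not_0_IZR; auto.
Qed.

Lemma gauss_prop alpha : 0 < alpha < 1 -> irrational alpha ->
  forall m, 0 < gauss alpha m < 1 /\ irrational (gauss alpha m).
Proof.
  intros Ha Hi m. induction m as [|m [IH1 IH2]]; [simpl; auto|].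
  cbn [gauss]. apply step_prop; auto.
Qed.

Lemma a_ge1 alpha : 0 < alpha < 1 -> irrational alpha ->
  forall m, (1 <= cf_a alpha (S m))%Z.
Proof.
  intros Ha Hi m. unfold cf_a. cbn [pred].
  destruct (gauss_prop alpha Ha Hi m) as [Hx _].
  set (x := gauss alpha m) in *.
  assert (H1 : 1 < / x).
  { apply Rmult_lt_reg_l with x; [lra|]. rewrite Rinv_r; lra. }
  destruct (base_Int_part (/ x)) as [B1 B2].
  assert (0 < Int_part (/ x))%Z by (apply lt_IZR; simpl; lra). lia.
Qed.

Lemma int_bundle alpha : 0 < alpha < 1 -> irrational alpha -> forall m,
  let p := cf_p alpha m in let P := cf_p alpha (S m) in
  let q := cf_q alpha m in let Q := cf_q alpha (S m) in
  (0 <= p /\ 1 <= P /\ 1 <= q <= Q /\ p <= q /\ P <= Q /\ (p < q \/ P < Q)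
   /\ P * q - p * Q = sgnZ m)%Z.
Proof.
  intros Ha Hi m. induction m as [|m IH].
  - simpl. rewrite p0, q0, p1, q1. pose proof (a_ge1 alpha Ha Hi 0). unfold sgnZ; simpl. lia.
  - simpl in *. rewrite p_SS, q_SS. pose proof (a_ge1 alpha Ha Hi (S m)).
    unfold sgnZ in *. rewrite even_S.
    set (a := cf_a alpha (S (S m))) in *.
    destruct IH as (I1 & I2 & I3 & I4 & I5 & I6 & I7).
    destruct (Nat.even m); simpl; nia.
Qed.

Fixpoint prodx (alpha : R) (m : nat) : R :=
  match m with O => 1 | S k => prodx alpha k * gauss alpha k end.

Lemma prodx_pos alpha : 0 < alpha < 1 -> irrational alpha -> forall m, 0 < prodx alpha m.
Proof.
  intros Ha Hi m. induction m; simpl; [lra|].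
  destruct (gauss_prop alpha Ha Hi m). apply Rmult_lt_0_compat; lra.
Qed.

Definition Dl alpha m := IZR (cf_q alpha m) * alpha - IZR (cf_p alpha m).

Lemma D_form alpha : 0 < alpha < 1 -> irrational alpha -> forall m,
  Dl alpha m = sgnR m * prodx alpha (S m) /\
  Dl alpha (S m) = sgnR (S m) * prodx alpha (S (S m)).
Proof.
  intros Ha Hi m. induction m as [|m [IH1 IH2]].
  - unfold Dl, sgnR. rewrite p0, q0, p1, q1. simpl. unfold cf_a. simpl.
    split; [ring|]. field. lra.
  - split; [exact IH2|].
    unfold Dl in *. rewrite p_SS, q_SS, !plus_IZR, !mult_IZR.
    unfold cf_a. cbn [pred prodx gauss].
    unfold sgnR in *. rewrite !even_S in *.
    cbn [prodx gauss] in IH1, IH2.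
    destruct (gauss_prop alpha Ha Hi (S m)) as [Hg _].
    cbn [gauss] in Hg.
    set (x1 := / gauss alpha m - IZR (Int_part (/ gauss alpha m))) in *.
    set (A := IZR (Int_part (/ x1))).
    transitivity (A * (IZR (cf_q alpha (S m)) * alpha - IZR (cf_p alpha (S m))) + 
            (IZR (cf_q alpha m) * alpha - IZR (cf_p alpha m))); [ring|].
    rewrite IH1, IH2.
    destruct (Nat.even m); simpl; field; lra.
Qed.

Lemma divq (k q P' p Q m s : Z) : (P' * q - p * Q = s)%Z -> (s * s = 1)%Z ->
  (k * p = q * m)%Z -> (-q < k < q)%Z -> (0 < q)%Z -> k = 0%Z.
Proof.
  intros Hd Hs Hk Hb Hq.
  assert (H : (k = q * (s * k * P' - s * m * Q))%Z).
  { transitivity (k * (s * s))%Z; [rewrite Hs; ring|].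
    rewrite <- Hd at 2.
    transitivity (s * k * P' * q - s * Q * (k * p))%Z; [ring|].
    rewrite Hk; ring. }
  set (t := (s * k * P' - s * m * Q)%Z) in *.
  destruct (Z.lt_trichotomy t 0) as [Ht|[Ht|Ht]]; nia.
Qed.

Lemma floor_even (p q P' Q : Z) (alpha D : R) :
  (1 <= p < q)%Z -> (q <= Q)%Z -> (P' * q - p * Q = 1)%Z ->
  IZR q * alpha = IZR p + D -> 0 < D -> IZR Q * D < 1 ->
  forall k, (- q < k <= Q + 1)%Z ->
  Int_part (IZR k * alpha) = Int_part (IZR k * (IZR p / IZR q)).
Proof.
  intros Hp HqQ Hd Ha HD HQD k Hk.
  assert (Hq : (0 < q)%Z) by lia.
  assert (HQ1 : 1 <= IZR Q) by (apply IZR_le; lia).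
  assert (HD1 : D < 1) by nra.
  destruct (Z_lt_le_dec Q k) as [Hk1|Hk1].
  - assert (k = Q + 1)%Z by lia. subst k.
    destruct (key (Q+1) p q P' alpha D Hq Ha) as [E1 E2].
    + nia.
    + replace ((Q + 1) * p - P' * q)%Z with (p - 1)%Z by nia.
      rewrite minus_IZR, plus_IZR.
      assert (IZR p + 1 <= IZR q) by (rewrite <- plus_IZR; apply IZR_le; lia).
      assert (1 <= IZR p) by (apply IZR_le; lia).
      nra.
    + congruence.
  - pose proof (Z.div_mod (k * p) q ltac:(lia)) as Hdm.
    pose proof (Z.mod_pos_bound (k * p) q Hq) as Hmod.
    set (m := (k * p / q)%Z) in *. set (r := (k * p mod q)%Z) in *.
    assert (Hr : (k * p - m * q = r)%Z) by lia.
    destruct (key k p q m alpha D Hq Ha) as [E1 E2].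
    + lia.
    + rewrite Hr.
      assert (IZR r + 1 <= IZR q) by (rewrite <- plus_IZR; apply IZR_le; lia).
      assert (0 <= IZR r) by (apply IZR_le; lia).
      destruct (Z_lt_le_dec k 0) as [Hk0|Hk0].
      * assert (Hr1 : (1 <= r)%Z).
        { destruct (Z.eq_dec r 0) as [Hr0|]; [|lia].
          exfalso. assert (k = 0%Z); [|lia].
          apply (divq k q P' p Q m 1); auto; lia. }
        apply IZR_le in Hr1.
        assert (IZR k < 0) by (apply IZR_lt; lia).
        assert (- IZR k <= IZR Q) by (rewrite <- opp_IZR; apply IZR_le; lia).
        nra.
      * assert (0 <= IZR k) by (apply IZR_le; lia).
        assert (IZR k <= IZR Q) by (apply IZR_le; lia).
        nra.
    + congruence.
Qed.

Lemma floor_odd (p q P' Q : Z) (alpha E : R) :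
  (1 <= p < q)%Z -> (q <= Q)%Z -> (P' * q - p * Q = -1)%Z ->
  IZR q * alpha = IZR p + - E -> 0 < E -> IZR Q * E < 1 ->
  forall k, (- Q - 1 <= k < q)%Z ->
  Int_part (IZR k * alpha) = Int_part (IZR k * (IZR p / IZR q)).
Proof.
  intros Hp HqQ Hd Ha HD HQD k Hk.
  assert (Hq : (0 < q)%Z) by lia.
  assert (HQ1 : 1 <= IZR Q) by (apply IZR_le; lia).
  assert (HD1 : E < 1) by nra.
  destruct (Z_lt_le_dec k (- Q)) as [Hk1|Hk1].
  - assert (k = - Q - 1)%Z by lia. subst k.
    destruct (key (-Q-1) p q (-(P'+1)) alpha (-E) Hq Ha) as [E1 E2].
    + nia.
    + replace ((- Q - 1) * p - - (P' + 1) * q)%Z with (q - p - 1)%Z by nia.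
      rewrite !minus_IZR, opp_IZR.
      assert (IZR p + 1 <= IZR q) by (rewrite <- plus_IZR; apply IZR_le; lia).
      assert (1 <= IZR p) by (apply IZR_le; lia).
      nra.
    + congruence.
  - pose proof (Z.div_mod (k * p) q ltac:(lia)) as Hdm.
    pose proof (Z.mod_pos_bound (k * p) q Hq) as Hmod.
    set (m := (k * p / q)%Z) in *. set (r := (k * p mod q)%Z) in *.
    assert (Hr : (k * p - m * q = r)%Z) by lia.
    destruct (key k p q m alpha (-E) Hq Ha) as [E1 E2].
    + lia.
    + rewrite Hr.
      assert (IZR r + 1 <= IZR q) by (rewrite <- plus_IZR; apply IZR_le; lia).
      assert (0 <= IZR r) by (apply IZR_le; lia).
      destruct (Z_lt_le_dec 0 k) as [Hk0|Hk0].
      * assert (Hr1 : (1 <= r)%Z).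
        { destruct (Z.eq_dec r 0) as [Hr0|]; [|lia].
          exfalso. assert (k = 0%Z); [|lia].
          apply (divq k q P' p Q m (-1)); auto; lia. }
        apply IZR_le in Hr1.
        assert (0 < IZR k) by (apply IZR_lt; lia).
        assert (IZR k <= IZR Q) by (apply IZR_le; lia).
        nra.
      * assert (IZR k <= 0) by (apply IZR_le; lia).
        assert (- IZR k <= IZR Q) by (rewrite <- opp_IZR; apply IZR_le; lia).
        nra.
    + congruence.
Qed.

Theorem lemma4p7 (alpha : R) (n : nat) :
  0 <= alpha <= 1 -> irrational alpha -> (2 <= n)%nat ->
  (forall k : Z,
     (if Nat.even n
      then (- cf_q alpha n + 1 <= k <= cf_q alpha (S n) - 2)%Z
      else (- cf_q alpha (S n) - 1 <= k <= cf_q alpha n - 2)%Z) ->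
     v (approx alpha n) k = v alpha k)
  /\
  (forall k : Z,
     (if Nat.even n
      then (- cf_q alpha (S n) - 1 <= k <= cf_q alpha n - 2)%Z
      else (- cf_q alpha n + 1 <= k <= cf_q alpha (S n) - 2)%Z) ->
     vt (approx alpha n) k = vt alpha k).
Proof.
  intros Ha0 Hi Hn.
  assert (Ha : 0 < alpha < 1).
  { destruct (Req_dec alpha 0) as [H0|H0].
    { exfalso; apply Hi. exists 0%Z, 1%Z. split; [lia|]. rewrite H0. simpl. field. }
    destruct (Req_dec alpha 1) as [H1|H1].
    { exfalso; apply Hi. exists 1%Z, 1%Z. split; [lia|]. rewrite H1. simpl. field. }
    lra. }
  destruct n as [|[|n0]]; [lia|lia|].
  pose proof (int_bundle alpha Ha Hi (S (S n0))) as B. cbv zeta in B.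
  pose proof (int_bundle alpha Ha Hi (S n0)) as B1. cbv zeta in B1.
  pose proof (int_bundle alpha Ha Hi n0) as B0. cbv zeta in B0.
  pose proof (p_SS alpha n0) as Hp. pose proof (q_SS alpha n0) as Hq.
  pose proof (a_ge1 alpha Ha Hi (S n0)) as Ha1.
  set (N := S (S n0)) in *.
  set (p := cf_p alpha N) in *. set (q := cf_q alpha N) in *.
  set (P' := cf_p alpha (S N)) in *. set (Q := cf_q alpha (S N)) in *.
  assert (Hpq : (1 <= p < q)%Z) by nia.
  destruct B as (_ & _ & HqQ & _ & _ & _ & Hdet).
  destruct (D_form alpha Ha Hi N) as [D1 D2].
  pose proof (prodx_pos alpha Ha Hi (S N)) as E1.
  pose proof (prodx_pos alpha Ha Hi (S (S N))) as E2.
  unfold Dl in D1, D2. fold p q P' Q in D1, D2.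
  set (E := prodx alpha (S N)) in *. set (E' := prodx alpha (S (S N))) in *.
  assert (Hrel : IZR Q * (IZR q * alpha - IZR p) - IZR q * (IZR Q * alpha - IZR P')
                 = IZR (sgnZ N)).
  { rewrite <- Hdet, minus_IZR, !mult_IZR. ring. }
  assert (Hq1 : 1 <= IZR q) by (apply IZR_le; lia).
  assert (Hbeta : 0 < IZR p / IZR q <= 1).
  { assert (1 <= IZR p) by (apply IZR_le; lia).
    assert (IZR p <= IZR q) by (apply IZR_le; lia).
    split.
    - unfold Rdiv. apply Rmult_lt_0_compat; [lra|]. apply Rinv_0_lt_compat; lra.
    - unfold Rdiv. apply Rmult_le_reg_r with (IZR q); [lra|].
      rewrite Rmult_assoc, Rinv_l, Rmult_1_r, Rmult_1_l; lra. }
  assert (Ha' : 0 < alpha <= 1) by lra.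
  unfold approx. fold N p q.
  unfold sgnR, sgnZ in *. rewrite even_S in D2.
  destruct (Nat.even N); simpl in D1, D2, Hrel.
  - assert (HQE : IZR Q * E < 1).
    { rewrite D1, D2 in Hrel. assert (0 < IZR q * E') by nra. nra. }
    assert (Hal : IZR q * alpha = IZR p + E) by lra.
    pose proof (floor_even p q P' Q alpha E Hpq (proj2 HqQ) Hdet Hal
                  ltac:(lra) HQE) as F.
    split; intros k Hk.
    + rewrite !v_floor by auto.
      rewrite (F k) by lia. rewrite (F (k+1)%Z) by lia. reflexivity.
    + rewrite !vt_floor by auto.
      rewrite (F (-k)%Z) by lia. rewrite (F (-k-1)%Z) by lia. reflexivity.
  - assert (HQE : IZR Q * E < 1).
    { rewrite D1, D2 in Hrel. assert (0 < IZR q * E') by nra. nra. }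
    assert (Hal : IZR q * alpha = IZR p + - E) by lra.
    pose proof (floor_odd p q P' Q alpha E Hpq (proj2 HqQ) Hdet Hal
                  ltac:(lra) HQE) as F.
    split; intros k Hk.
    + rewrite !v_floor by auto.
      rewrite (F k) by lia. rewrite (F (k+1)%Z) by lia. reflexivity.
    + rewrite !vt_floor by auto.
      rewrite (F (-k)%Z) by lia. rewrite (F (-k-1)%Z) by lia. reflexivity.
Qed.
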